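(* Let $R$ be a von Neumann regular ring with $\omega(\Gamma'(R))<\infty$. Then $\Gamma'(R)$ is a perfect graph.
   Context: All rings are commutative with identity $1\neq 0$. $W^*(R)$ denotes the set of non-zero non-unit elements of $R$. The cozero-divisor graph $\Gamma'(R)$ is the simple graph with vertex set $W^*(R)$, in which distinct $a,b$ are adjacent iff $a\notin Rb$ and $b\notin Ra$. A ring $R$ is von Neumann regular if for every $r\in R$ there is $s\in R$ with $r=r^2s$. $\omega(G)$ is the clique number of a graph $G$ and $\chi(G)$ its chromatic number. A graph $G$ is perfect if every induced subgraph $H$ of $G$ satisfies $\omega(H)=\chi(H)$. *)

(* Defs.v *)
From HB Require Import structures.
From mathcomp Require Import all_boot all_order all_algebra.
Set Implicit Arguments. Unset Strict Implicit. Unset Printing Implicit Defensive.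
Import GRing.Theory.
Local Open Scope ring_scope.

Definition is_unit (R : comNzRingType) (x : R) : Prop := exists y : R, x * y = 1.

Definition Wstar (R : comNzRingType) (x : R) : Prop := x <> 0 /\ ~ is_unit x.

Definition in_principal (R : comNzRingType) (a b : R) : Prop := exists r : R, a = r * b.

Definition cozero_adj (R : comNzRingType) (a b : R) : Prop :=
  [/\ Wstar a, Wstar b, a <> b, ~ in_principal a b & ~ in_principal b a].

Definition von_neumann_regular (R : comNzRingType) : Prop :=
  forall r : R, exists s : R, r = r ^+ 2 * s.

(* ---------- Graph-theoretic notions for a (possibly infinite) simple graph
   given by an adjacency relation [adj] on a type [T]; a vertex subset is a
   predicate [S]; the induced subgraph on S is (S, adj restricted to S). ---- *)

Definition is_clique (T : eqType) (adj : T -> T -> Prop) (S : T -> Prop) (l : seq T) : Prop :=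
  [/\ uniq l, (forall x, x \in l -> S x) &
      (forall x y, x \in l -> y \in l -> x <> y -> adj x y)].

Definition clique_number_is (T : eqType) (adj : T -> T -> Prop) (S : T -> Prop) (n : nat) : Prop :=
  (exists l, is_clique adj S l /\ size l = n) /\
  (forall l, is_clique adj S l -> (size l <= n)%N).

Definition finite_clique_number (T : eqType) (adj : T -> T -> Prop) (S : T -> Prop) : Prop :=
  exists n : nat, forall l, is_clique adj S l -> (size l <= n)%N.

Definition proper_coloring (T : eqType) (adj : T -> T -> Prop) (S : T -> Prop) (n : nat)
  (c : T -> nat) : Prop :=
  (forall x, S x -> (c x < n)%N) /\
  (forall x y, S x -> S y -> adj x y -> c x <> c y).

Definition colorable (T : eqType) (adj : T -> T -> Prop) (S : T -> Prop) (n : nat) : Prop :=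
  exists c : T -> nat, proper_coloring adj S n c.

Definition chromatic_number_is (T : eqType) (adj : T -> T -> Prop) (S : T -> Prop) (n : nat) : Prop :=
  colorable adj S n /\ (forall m, colorable adj S m -> (n <= m)%N).

(* G = (V, adj) is perfect: every induced subgraph H satisfies omega(H) = chi(H),
   equality being taken in nat \cup {infinity}: for every finite n,
   omega(H) = n iff chi(H) = n. *)
Definition perfect (T : eqType) (adj : T -> T -> Prop) (V : T -> Prop) : Prop :=
  forall S : T -> Prop, (forall x, S x -> V x) ->
    forall n : nat, clique_number_is adj S n <-> chromatic_number_is adj S n.

(* Main.v *)
Require Import Defs.
From HB Require Import structures.
From mathcomp Require Import all_boot all_order all_algebra.
From Stdlib Require Import ClassicalEpsilon.
Set Implicit Arguments. Unset Strict Implicit. Unset Printing Implicit Defensive.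
Import GRing.Theory.

Section Dil.
Variables (T : finType) (le : rel T).
Hypothesis le_refl : reflexive le.
Hypothesis le_tr : transitive le.

Definition comp x y := le x y || le y x.
Definition antichain (A : {set T}) :=
  [forall x in A, forall y in A, (x != y) ==> ~~ comp x y].

Lemma antichainP (A : {set T}) : reflect (forall x y, x \in A -> y \in A -> x != y -> ~~ comp x y)
  (antichain A).
Proof.
apply: (iffP forall_inP) => H.
  by move=> x y xA yA nxy; move/forall_inP: (H x xA) => /(_ y yA) /implyP; apply.
by move=> x xA; apply/forall_inP => y yA; apply/implyP; apply: H.
Qed.

Lemma exists_max (Q : {set T}) x0 : x0 \in Q ->
  exists2 x, x \in Q & forall y, y \in Q -> le x y -> le y x.
Proof.
move=> Qx0.
case: (arg_maxnP (fun b => #|[set y in Q | le y b]|) Qx0) => a aQ Ha.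
exists a => // y yQ lay; apply/negPn/negP => nlya.
have := Ha y yQ; apply/negP; rewrite -ltnNge; apply: proper_card.
apply/properP; split.
  by apply/subsetP => z; rewrite !inE => /andP[-> lza]; apply: le_tr lza lay.
by exists y; rewrite !inE ?yQ ?le_refl // nlya.
Qed.

Lemma dilworth (P : {set T}) (w : nat) :
  (forall A : {set T}, A \subset P -> antichain A -> #|A| <= w) ->
  exists f : T -> nat, (forall x, x \in P -> f x < w) /\
    (forall x y, x \in P -> y \in P -> f x = f y -> comp x y).
Proof.
have [N] := ubnP #|P|; elim: N P w => // N IH P w HPN Hw.
case: (set_0Vmem P) => [->|[a0 Pa0]].
  by exists (fun _ => 0); split=> x; rewrite inE.
have [a Pa amax] := exists_max Pa0.
set P' := P :\ a.
have P'P : P' \subset P by apply: subsetDl.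
have cP' : #|P'| < N.
  by move: HPN; rewrite (cardsD1 a P) Pa add1n ltnS.
set ac' := fun A : {set T} => (A \subset P') && antichain A.
set w' := \max_(A | ac' A) #|A|.
have Hw' : forall A : {set T}, A \subset P' -> antichain A -> #|A| <= w'.
  by move=> A H1 H2; apply: leq_bigmax_cond; rewrite /ac' H1.
have [A0 A0ac A0w] : {A0 | ac' A0 & w' = #|A0|}.
  apply: eq_bigmax_cond; apply/card_gt0P; exists set0.
  by rewrite unfold_in /ac' sub0set; apply/antichainP => x y; rewrite inE.
have [f' [f'lt f'comp]] := IH P' w' cP' Hw'.
have w'w : w' <= w.
  rewrite A0w; case/andP: A0ac => s ac; apply: Hw => //; apply: subset_trans s P'P.
have F1 : forall A : {set T}, A \subset P' -> antichain A -> #|A| = w' ->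
    forall i, i < w' -> exists2 y, y \in A & f' y = i.
  move=> A sA acA cA i iw.
  have u : uniq [seq f' y | y <- enum A].
    rewrite map_inj_in_uniq ?enum_uniq // => x y; rewrite !mem_enum => xA yA fxy.
    apply/eqP; apply/negPn/negP => nxy.
    have := antichainP _ acA x y xA yA nxy; rewrite f'comp //.
      by apply: (subsetP sA). by apply: (subsetP sA).
  have sub : {subset [seq f' y | y <- enum A] <= iota 0 w'}.
    move=> j /mapP[y]; rewrite mem_enum => yA ->.
    by rewrite mem_iota /= f'lt // (subsetP sA).
  have sz : size (iota 0 w') <= size [seq f' y | y <- enum A].
    by rewrite size_iota size_map -cardE cA.
  have [_ eqs] := uniq_min_size u sub sz.
  have : i \in iota 0 w' by rewrite mem_iota.
  by rewrite -eqs => /mapP[y]; rewrite mem_enum => yA ->; exists y.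
set M := [set y in P' | [exists A : {set T}, [&& ac' A, #|A| == w' & y \in A]]].
have inM : forall (A : {set T}) y, A \subset P' -> antichain A -> #|A| = w' -> y \in A -> y \in M.
  move=> A y sA acA cA yA; rewrite inE (subsetP sA) //=.
  by apply/existsP; exists A; rewrite /ac' sA acA cA eqxx yA.
have MP' : forall y, y \in M -> y \in P' by move=> y; rewrite inE => /andP[].
have Mac : forall y, y \in M -> exists A : {set T}, [/\ A \subset P', antichain A, #|A| = w' & y \in A].
  move=> y; rewrite inE => /andP[_ /existsP[A /and3P[/andP[sA acA] /eqP cA yA]]].
  by exists A.
set Xs := fun (i : nat) z => [&& z \in M, f' z == i & [forall y in M, (f' y == i) ==> le y z]].
set x := fun i => odflt a [pick z | Xs i z].
have xP : forall i, i < w' -> Xs i (x i).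
  move=> i iw; rewrite /x; case: pickP => [z //|none].
  have [y0 y0A fy0] := F1 A0 (proj1 (andP A0ac)) (proj2 (andP A0ac)) (esym A0w) i iw.
  have y0M : y0 \in [set y in M | f' y == i].
    by rewrite inE fy0 eqxx andbT (inM A0) //; case/andP: A0ac.
  have [z zin zmax] := exists_max y0M.
  move: zin; rewrite inE => /andP[zM /eqP fz].
  have := none z; rewrite /Xs zM fz eqxx /=; move/negbT/negP; case.
  apply/forall_inP => y yM; apply/implyP => /eqP fy.
  have : comp z y by apply: f'comp; rewrite ?fz ?fy // MP'.
  case/orP => // lzy; apply: zmax => //; by rewrite inE yM fy eqxx.
have xM : forall i, i < w' -> x i \in M by move=> i /xP /and3P[].
have fx : forall i, i < w' -> f' (x i) = i by move=> i /xP /and3P[_ /eqP].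
have xtop : forall i y, i < w' -> y \in M -> f' y = i -> le y (x i).
  move=> i y /xP /and3P[_ _ /forall_inP H] yM fy.
  by move/implyP: (H y yM); apply; rewrite fy.
have key : forall i j, i < w' -> j < w' -> i != j -> ~~ le (x i) (x j).
  move=> i j iw jw nij; apply/negP => lij.
  have [B [sB acB cB xjB]] := Mac _ (xM j jw).
  have [z zB fz] := F1 B sB acB cB i iw.
  have lzi : le z (x i) by apply: xtop => //; apply: inM zB.
  have nzx : z != x j by apply/eqP => ezx; move: fz; rewrite ezx fx // => eji; move: nij; rewrite eji eqxx.
  have := antichainP _ acB z (x j) zB xjB nzx.
  by rewrite /comp (le_tr lzi lij).
case: (boolP [exists i : 'I_w', comp (x i) a]) => [/existsP[i ci]|noc].
  have iw := ltn_ord i.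
  have lia : le (x i) a.
    case/orP: ci => // lai; apply: amax => //; apply: (subsetP P'P); apply: MP'; exact: xM.
  set K := a |: [set y in P' | (f' y == i) && le y (x i)].
  set P2 := P :\: K.
  have P2P' : P2 \subset P'.
    apply/subsetP => y; rewrite !inE => /andP[/norP[nya _] yP]; by rewrite nya.
  have cP2 : #|P2| < N by apply: leq_ltn_trans (subset_leq_card P2P') cP'.
  have HP2 : forall A : {set T}, A \subset P2 -> antichain A -> #|A| <= w'.-1.
    move=> A sA acA; have sA' := subset_trans sA P2P'.
    have := Hw' A sA' acA; rewrite leq_eqVlt => /orP[/eqP cA|]; last by move=> lt; rewrite -ltnS (ltn_predK lt).
    have [y yA fy] := F1 A sA' acA cA i iw.
    have yK : y \in K.
      have yP' : y \in P' := subsetP sA' _ yA.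
      have lyx : le y (x i) by apply: xtop => //; apply: (inM A).
      by rewrite in_setU1 inE yP' fy eqxx lyx orbT.
    by have := subsetP sA _ yA; rewrite inE yK.
  have [f2 [f2lt f2comp]] := IH P2 _ cP2 HP2.
  have w'pos : 0 < w' by apply: leq_ltn_trans iw.
  exists (fun y => if y \in K then w'.-1 else f2 y); split.
    move=> y yP; case: ifP => yK.
      by apply: leq_trans w'w; rewrite prednK.
    apply: leq_trans (f2lt _ _) _; first by rewrite inE yK yP.
    by apply: leq_trans (leq_pred _) w'w.
  have Kcomp : forall y z, y \in K -> z \in K -> comp y z.
    have Kle : forall y, y \in K -> y != a -> (f' y == i) && le y (x i) && (y \in P').
      by move=> y; rewrite !inE => /orP[-> // | /andP[yP' ->]]; rewrite yP' andbT.
    move=> y z yK zK.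
    case: (eqVneq y a) => [-> | nya]; case: (eqVneq z a) => [-> | nza].
    - by rewrite /comp le_refl.
    - by case/andP: (Kle z zK nza) => /andP[_ lz] _; rewrite /comp (le_tr lz lia) orbT.
    - by case/andP: (Kle y yK nya) => /andP[_ ly] _; rewrite /comp (le_tr ly lia).
    - case/andP: (Kle y yK nya) => /andP[/eqP fy _] yP'.
      case/andP: (Kle z zK nza) => /andP[/eqP fz _] zP'.
      by apply: f'comp; rewrite ?fy ?fz.
  move=> y z yP zP; case: ifP => yK; case: ifP => zK.
  - by move=> _; apply: Kcomp.
  - have : f2 z < w'.-1 by apply: f2lt; rewrite inE zK zP.
    by move=> lt eq; rewrite -eq ltnn in lt.
  - have : f2 y < w'.-1 by apply: f2lt; rewrite inE yK yP.
    by move=> lt eq; rewrite eq ltnn in lt.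
  - by apply: f2comp; rewrite inE ?yK ?zK ?yP ?zP.
have xa : forall i, i < w' -> ~~ comp (x i) a.
  by move=> i iw; apply/negP => ci; move/existsP: noc; apply; exists (Ordinal iw).
set X := a |: [set x (nat_of_ord i) | i : 'I_w'].
have xinj : injective (fun i : 'I_w' => x i).
  by move=> i j /(congr1 f'); rewrite !fx // => /val_inj.
have aX : a \notin [set x (nat_of_ord i) | i : 'I_w'].
  apply/imsetP => -[i _ ai]; have := xa i (ltn_ord i); rewrite -ai /comp le_refl.
  done.
have cX : #|X| = w'.+1 by rewrite cardsU1 aX card_imset // card_ord.
have XP : X \subset P.
  apply/subsetP => y; rewrite !inE => /orP[/eqP -> // | /imsetP[i _ ->]].
  by apply: (subsetP P'P); apply: MP'; apply: xM.
have acX : antichain X.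
  apply/antichainP => y z; rewrite !inE => /orP[/eqP ->|/imsetP[i _ ->]] /orP[/eqP ->|/imsetP[j _ ->]].
  - by rewrite eqxx.
  - by move=> _; rewrite /comp orbC; apply: xa.
  - by move=> _; apply: xa.
  - move=> nij; have nij' : nat_of_ord i != nat_of_ord j by apply: contra nij => /eqP ->.
    by rewrite /comp negb_or key // key // eq_sym.
have w'w1 : w'.+1 <= w by rewrite -cX; apply: Hw.
exists (fun y => if y == a then w' else f' y); split.
  move=> y yP; case: eqP => [_ | nya]; first by apply: leq_trans w'w1.
  by apply: leq_trans (f'lt _ _) (ltnW w'w1); rewrite !inE yP andbT; apply/eqP.
move=> y z yP zP; case: eqP => [-> | nya]; case: eqP => [-> | nza].
- by rewrite /comp le_refl.
- have : f' z < w' by apply: f'lt; rewrite !inE zP andbT; apply/eqP.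
  by move=> lt eq; rewrite eq ltnn in lt.
- have : f' y < w' by apply: f'lt; rewrite !inE yP andbT; apply/eqP.
  by move=> lt eq; rewrite eq ltnn in lt.
- by apply: f'comp; rewrite !inE ?yP ?zP andbT; apply/eqP.
Qed.
End Dil.

Local Open Scope ring_scope.

Definition asb (P : Prop) : bool := if excluded_middle_informative P then true else false.
Lemma asbP (P : Prop) : reflect P (asb P).
Proof. by rewrite /asb; case: excluded_middle_informative => h; constructor. Qed.

Section RingPart.
Variable R : comNzRingType.

Definition orth (k : nat) (e : nat -> R) : Prop :=
  [/\ (forall i, (i < k)%N -> e i * e i = e i),
      (forall i j, (i < k)%N -> (j < k)%N -> i != j -> e i * e j = 0),
      \sum_(i < k) e i = 1 &
      (forall i, (i < k)%N -> e i != 0)].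

Lemma orth_bound (m0 : nat) k e :
  (forall l, is_clique (@cozero_adj R) (@Wstar R) l -> (size l <= m0)%N) ->
  orth k e -> (k <= maxn m0 1)%N.
Proof.
move=> hm [eid eo _ enz].
case: (leqP k 1) => [k1|k2]; first by rewrite leq_max k1 orbT.
have ws : forall i, (i < k)%N -> Wstar (e i).
  move=> i ik; split; first exact/eqP/enz.
  rewrite /is_unit => -[y hy].
  set j := if i == 0%N then 1%N else 0%N.
  have jk : (j < k)%N by rewrite /j; case: ifP => _ //; apply: leq_ltn_trans k2.
  have nji : j != i by rewrite /j; case: (eqVneq i 0%N) => [->|] //; rewrite eq_sym.
  have : e j = 0 by rewrite -[e j]mulr1 -hy mulrA eo // mul0r.
  by apply/eqP; apply: enz.
have np : forall i j, (i < k)%N -> (j < k)%N -> i != j -> ~ in_principal (e i) (e j).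
  move=> i j ik jk nij [r hr]; move/eqP: (enz i ik); apply.
  by rewrite -eid // {2}hr mulrCA eo // mulr0.
have uq : uniq [seq e j | j <- iota 0 k].
  rewrite map_inj_in_uniq ?iota_uniq // => i j; rewrite !mem_iota /= => ik jk eij.
  apply/eqP; apply/negPn/negP => nij; move/eqP: (enz i ik); apply.
  by rewrite -eid // {2}eij eo.
suff cl : is_clique (@cozero_adj R) (@Wstar R) [seq e j | j <- iota 0 k].
  by have := hm _ cl; rewrite size_map size_iota leq_max => ->.
split=> //.
  by move=> x /mapP[i]; rewrite mem_iota /= => ik ->; apply: ws.
move=> x y /mapP[i]; rewrite mem_iota /= => ik -> /mapP[j]; rewrite mem_iota /= => jk -> nxy.
have nij : i != j by apply/eqP => eij; apply: nxy; rewrite eij.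
split; try apply: ws => //; first by [].
  by apply: np. by apply: np; rewrite // eq_sym.
Qed.

Lemma exists_atoms (m0 : nat) :
  (forall l, is_clique (@cozero_adj R) (@Wstar R) l -> (size l <= m0)%N) ->
  exists k e, orth k e /\ forall i f, (i < k)%N -> f * f = f ->
     f * e i = 0 \/ f * e i = e i.
Proof.
move=> hm.
have ex1 : exists n, asb (exists e, orth n e).
  exists 1%N; apply/asbP; exists (fun _ => 1); split.
  - by move=> i _; rewrite mulr1.
  - by move=> i j; rewrite !ltnS !leqn0 => /eqP -> /eqP ->; rewrite eqxx.
  - by rewrite big_ord1.
  - by move=> i _; apply: oner_neq0.
have ub : forall n, asb (exists e, orth n e) -> (n <= maxn m0 1)%N.
  by move=> n /asbP[e oe]; apply: orth_bound oe.
case: (ex_maxnP ex1 ub) => k /asbP[e oe] kmax.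
exists k, e; split => // i f ik ff.
case: (eqVneq (f * e i) 0) => [->|nz0]; first by left.
case: (eqVneq (f * e i) (e i)) => [->|nze]; first by right.
exfalso.
have [eid eo esum enz] : orth k e := oe.
set A := f * e i. set B := (1 - f) * e i.
have f1f : f * (1 - f) = 0 by rewrite mulrBr mulr1 ff subrr.
have AA : A * A = A by rewrite /A mulrACA ff eid.
have BB : B * B = B.
  rewrite /B mulrACA eid //; congr (_ * _).
  by rewrite mulrBl mul1r f1f subr0.
have AB : A * B = 0 by rewrite /A /B mulrACA f1f mul0r.
have Al : forall l, (l < k)%N -> l != i -> A * e l = 0.
  by move=> l lk li; rewrite /A -mulrA eo // ?mulr0 // eq_sym.
have Bl : forall l, (l < k)%N -> l != i -> B * e l = 0.
  by move=> l lk li; rewrite /B -mulrA eo // ?mulr0 // eq_sym.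
have ApB : A + B = e i by rewrite /A /B -mulrDl addrC subrK mul1r.
have Bnz : B != 0.
  by apply: contra nze => /eqP B0; apply/eqP; rewrite -[in RHS]ApB B0 addr0.
set e' := fun j => if j == i then A else if j == k then B else e j.
have ki : (k == i) = false by rewrite eq_sym ltn_eqF.
have lt_k : forall j, (j < k.+1)%N -> j != k -> (j < k)%N.
  by move=> j; rewrite ltnS leq_eqVlt => /orP[->|].
have : (k.+1 <= k)%N; last by rewrite ltnn.
apply: kmax; apply/asbP; exists e'; split.
- move=> j jk; rewrite /e'; case: ifP => [_|ji]; first by [].
  case: ifP => [_|jk']; first by [].
  by apply: eid; apply: lt_k => //; rewrite jk'.
- move=> j l jk lk njl; rewrite /e'.
  case: (eqVneq j i) => [ji|ji]; case: (eqVneq l i) => [li|li].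
  + by move: njl; rewrite ji li eqxx.
  + case: (eqVneq l k) => [_|lk']; first by [].
    by apply: Al; rewrite ?lt_k.
  + case: (eqVneq j k) => [_|jk']; first by rewrite mulrC.
    by rewrite mulrC Al ?lt_k.
  + case: (eqVneq j k) => [ej|jk']; case: (eqVneq l k) => [el|lk'].
    * by move: njl; rewrite ej el eqxx.
    * by rewrite Bl ?lt_k.
    * by rewrite mulrC Bl ?lt_k.
    * by rewrite eo ?lt_k.
- set rest := \sum_(j < k | j != Ordinal ik) e j.
  have Hr : \sum_(j < k) e j = e i + rest by rewrite (bigD1 (Ordinal ik)).
  have Hl : \sum_(j < k) e' j = A + rest.
    rewrite (bigD1 (Ordinal ik)) //= {1}/e' eqxx; congr (_ + _).
    apply: eq_bigr => j nj; rewrite /e'.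
    have -> : (nat_of_ord j == i) = false by apply/negbTE.
    by rewrite ltn_eqF.
  rewrite big_ord_recr /= Hl /e' ki eqxx -esum Hr.
  transitivity (A + B + rest); first by rewrite addrAC.
  by rewrite ApB.
- move=> j jk; rewrite /e'; case: ifP => [_|ji]; first by [].
  case: ifP => [_|jk']; first by [].
  by apply: enz; apply: lt_k => //; rewrite jk'.
Qed.

Lemma atom_principal k e (vnr : von_neumann_regular R) :
  orth k e -> (forall i f, (i < k)%N -> f * f = f -> f * e i = 0 \/ f * e i = e i) ->
  forall i b, (i < k)%N -> b * e i != 0 -> in_principal (e i) b.
Proof.
move=> [eid _ _ _] atom i b ik nz.
set c := b * e i.
have [s hs] := vnr c.
set g := c * s.
have gg : g * g = g by rewrite /g mulrACA -expr2 mulrA -hs.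
have ge : g * e i = g.
  by rewrite /g /c -!mulrA; congr (b * _); rewrite mulrCA (eid _ ik) mulrC.
case: (atom i g ik gg) => h.
  move: nz; rewrite -/c hs expr2 -mulrA -/g -ge h mulr0 eqxx.
  by [].
by exists (e i * s); rewrite -{1}h ge /g /c [RHS]mulrC mulrA.
Qed.

Lemma principal_iff k e (vnr : von_neumann_regular R) :
  orth k e -> (forall i f, (i < k)%N -> f * f = f -> f * e i = 0 \/ f * e i = e i) ->
  forall a b, in_principal a b <->
    [set j : 'I_k | a * e j != 0] \subset [set j : 'I_k | b * e j != 0].
Proof.
move=> oe atom a b; split.
  case=> r ->; apply/subsetP => j; rewrite !inE; apply: contra => /eqP h.
  by rewrite -mulrA h mulr0.
move=> /subsetP sub.
have [_ _ esum _] := oe.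
have -> : a = \sum_(j < k) a * e j by rewrite -mulr_sumr esum mulr1.
apply: (big_ind (fun x => in_principal x b)).
- by exists 0; rewrite mul0r.
- by move=> x y [r1 ->] [r2 ->]; exists (r1 + r2); rewrite mulrDl.
- move=> j _; case: (eqVneq (a * e j) 0) => [->|nz]; first by exists 0; rewrite mul0r.
  have : j \in [set j : 'I_k | b * e j != 0] by apply: sub; rewrite inE.
  rewrite inE => nzb.
  have [r hr] := atom_principal vnr oe atom (ltn_ord j) nzb.
  by exists (a * r); rewrite hr mulrA.
Qed.
End RingPart.

Local Open Scope ring_scope.

Lemma pigeon (T : eqType) (adj : T -> T -> Prop) (S : T -> Prop) m l :
  colorable adj S m -> is_clique adj S l -> (size l <= m)%N.
Proof.
move=> [c [clt cadj]] [u inS adjl].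
have u' : uniq [seq c x | x <- l].
  rewrite map_inj_in_uniq // => x y xl yl cxy; apply/eqP; apply/negPn/negP => nxy.
  by apply: (cadj x y (inS x xl) (inS y yl) _ cxy); apply: adjl => //; apply/eqP.
have := uniq_leq_size u' (s2 := iota 0 m).
rewrite size_map size_iota; apply => j /mapP[x xl ->].
by rewrite mem_iota /= clt //; apply: inS.
Qed.

Theorem theorem3p4 (R : comNzRingType) :
  von_neumann_regular R ->
  finite_clique_number (@cozero_adj R) (@Wstar R) ->
  perfect (@cozero_adj R) (@Wstar R).
Proof.
move=> vnr [m0 hm] S SW n.
have [k [e [oe atom]]] := exists_atoms hm.
pose I (x : R) := [set j : 'I_k | x * e j != 0].
have Hiff : forall a b, in_principal a b <-> I a \subset I b.
  by move=> a b; apply: principal_iff.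
have main : forall m, (forall l, is_clique (@cozero_adj R) S l -> (size l <= m)%N) ->
    colorable (@cozero_adj R) S m.
  move=> m bnd.
  pose P := [set t : {set 'I_k} | asb (exists x, S x /\ I x = t)].
  pose pre (t : {set 'I_k}) : R :=
    match excluded_middle_informative (exists x, S x /\ I x = t) with
    | left h => proj1_sig (constructive_indefinite_description _ h)
    | right _ => 0 end.
  have preP : forall t, t \in P -> S (pre t) /\ I (pre t) = t.
    move=> t; rewrite inE => /asbP h; rewrite /pre.
    case: excluded_middle_informative => // h'.
    exact: proj2_sig (constructive_indefinite_description _ h').
  have width : forall A : {set {set 'I_k}}, A \subset P ->
      antichain (fun A B : {set 'I_k} => A \subset B) A -> (#|A| <= m)%N.
    move=> A sA acA.
    have sA' : forall t, t \in A -> t \in P by apply/subsetP.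
    have := bnd [seq pre t | t <- enum A]; rewrite size_map -cardE; apply.
    split.
    - rewrite map_inj_in_uniq ?enum_uniq // => t t'; rewrite !mem_enum => tA t'A ptt.
      by rewrite -(proj2 (preP t (sA' t tA))) ptt (proj2 (preP t' (sA' t' t'A))).
    - by move=> x /mapP[t]; rewrite mem_enum => tA ->; apply: (proj1 (preP t (sA' t tA))).
    - move=> x y /mapP[t]; rewrite mem_enum => tA -> /mapP[t']; rewrite mem_enum => t'A -> nxy.
      have [St It] := preP t (sA' t tA).
      have [St' It'] := preP t' (sA' t' t'A).
      have ntt : t != t' by apply/eqP => ett; apply: nxy; rewrite ett.
      move/antichainP: (acA) => acA'.
      have := acA' t t' tA t'A ntt; rewrite /comp negb_or => /andP[n1 n2].
      split => //; try by apply: SW.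
      + by move/Hiff; rewrite It It'; apply/negP.
      + by move/Hiff; rewrite It It'; apply/negP.
  have [f [flt fcomp]] := dilworth (le := fun A B : {set 'I_k} => A \subset B)
     (@subxx _ _) (fun y x z => @subset_trans _ x y z) (P := P) (w := m) width.
  exists (fun x => f (I x)); split.
    by move=> x Sx; apply: flt; rewrite inE; apply/asbP; exists x.
  move=> x y Sx Sy [_ _ _ nxy nyx] fxy.
  have := fcomp (I x) (I y); rewrite !inE.
  case/(_ _ _ fxy)/orP.
  - by apply/asbP; exists x.
  - by apply/asbP; exists y.
  - by move/Hiff.
  - by move/Hiff.
split.
  move=> [[l [cl sz]] bnd]; split; first exact: main.
  by move=> m cm; rewrite -sz; apply: pigeon cm cl.
move=> [col minc].
have bnd : forall l, is_clique (@cozero_adj R) S l -> (size l <= n)%N.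
  by move=> l; apply: pigeon col.
have ex0 : exists j, asb (exists l, is_clique (@cozero_adj R) S l /\ size l = j).
  by exists 0%N; apply/asbP; exists [::]; split => //; split => // x; rewrite in_nil.
have ub : forall j, asb (exists l, is_clique (@cozero_adj R) S l /\ size l = j) -> (j <= n)%N.
  by move=> j /asbP[l [cl <-]]; apply: bnd.
case: (ex_maxnP ex0 ub) => mx /asbP[l [cl sl]] mmax.
have bndm : forall l, is_clique (@cozero_adj R) S l -> (size l <= mx)%N.
  by move=> l' cl'; apply: mmax; apply/asbP; exists l'.
have nmx : n = mx.
  apply/eqP; rewrite eqn_leq; apply/andP; split.
    by apply: minc; apply: main.
  by rewrite -sl; apply: bnd.
by rewrite nmx; split; [exists l | ].
Qed.
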